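(* Let $S$ be a ubiquitously dense subset of $[0,\infty)$ with $0\in S$, and put $\kappa=\operatorname{card}(S)$. Let $X$ be a discrete topological space with $\operatorname{card}(X)\le\kappa$, let $d\in\mathrm{Met}(X)$ and $\epsilon\in(0,\infty)$. Then there exists $e\in\mathrm{Met}(X;S)$ such that: (1) $\mathcal{D}_X(d,e)\le\epsilon$; (2) $e$ is uniformly discrete; (3) $e(x,y)<e(x,z)+e(z,y)$ for all pairwise distinct $x,y,z\in X$; (4) $e$ is strongly rigid.
   Context: A subset $S$ of a topological space $Y$ is ubiquitously dense if $\operatorname{card}(U\cap S)=\operatorname{card}(S)$ for every non-empty open $U\subseteq Y$. For a topological space $X$ and $S\subseteq[0,\infty)$ with $0\in S$, $\mathrm{Met}(X;S)$ is the set of metrics on $X$ with values in $S$ generating the topology of $X$, and $\mathrm{Met}(X)=\mathrm{Met}(X;[0,\infty))$; $\mathcal{D}_X(d,e)=\sup_{x,y\in X}|d(x,y)-e(x,y)|$. A metric $e$ is uniformly discrete if there is $c>0$ with $c<e(x,y)$ for all distinct $x,y$. A metric $e$ is strongly rigid if $e(x,y)=e(u,v)\neq0$ implies $\{x,y\}=\{u,v\}$. *)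

(* Defs.v *)
From HB Require Import structures.
From mathcomp Require Import all_boot all_order all_algebra.
From mathcomp Require Import all_classical all_reals all_analysis.
Set Implicit Arguments. Unset Strict Implicit. Unset Printing Implicit Defensive.
Import Order.TTheory GRing.Theory Num.Theory.
Import numFieldNormedType.Exports.
Local Open Scope classical_set_scope.
Local Open Scope ring_scope.

(* [S] is ubiquitously dense in the subspace Y = [0, oo) of R:
   for every non-empty relatively open U of Y, card (U `&` S) = card S.
   Relatively open subsets of Y are exactly V `&` Y with V open in R. *)
Definition ubiquitously_dense_nonneg (R : realType) (S : set R) : Prop :=
  forall V : set R, open V ->
    let U := V `&` [set x | 0 <= x] in
    U !=set0 -> ((U `&` S) #= S)%card.

Definition is_metric (R : realType) (X : Type) (d : X -> X -> R) : Prop :=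
  [/\ (forall x y, 0 <= d x y),
      (forall x y, d x y = 0 <-> x = y),
      (forall x y, d x y = d y x) &
      (forall x y z, d x y <= d x z + d z y)].

Definition metric_open (R : realType) (X : Type) (d : X -> X -> R) (A : set X)
  : Prop :=
  forall x, A x -> exists2 r : R, 0 < r & forall y, d x y < r -> A y.

Definition Met (R : realType) (X : topologicalType) (S : set R)
  (d : X -> X -> R) : Prop :=
  [/\ is_metric d,
      (forall A : set X, open A <-> metric_open d A) &
      (forall x y, S (d x y))].

Definition DX (R : realType) (X : Type) (d e : X -> X -> R) : \bar R :=
  ereal_sup [set (`|d xy.1 xy.2 - e xy.1 xy.2|)%:E | xy in [set: X * X]].

Definition uniformly_discrete (R : realType) (X : Type) (e : X -> X -> R)
  : Prop :=
  exists2 c : R, 0 < c & forall x y, x <> y -> c < e x y.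

Definition strongly_rigid (R : realType) (X : Type) (e : X -> X -> R) : Prop :=
  forall x y u v, e x y = e u v -> e x y <> 0 ->
    (x = u /\ y = v) \/ (x = v /\ y = u).

(* Main.v *)
Require Import Defs.
From HB Require Import structures.
From mathcomp Require Import all_boot all_order all_algebra.
From mathcomp Require Import all_classical all_reals all_analysis.
From mathcomp Require Import zify ring lra.
Import Order.TTheory GRing.Theory Num.Theory.
Import numFieldNormedType.Exports.
Local Open Scope classical_set_scope.

Definition gfun {X Y : Type} (y0 : Y) (G : set (X * Y)) (x : X) : Y :=
  match pselect (exists y, G (x, y)) with
  | left h => projT1 (cid h)
  | right _ => y0 end.

Lemma gfunP {X Y : Type} (y0 : Y) (G : set (X * Y)) x :
  (exists y, G (x, y)) -> G (x, gfun y0 G x).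
Proof.
move=> h; rewrite /gfun; case: pselect => [h'|//].
exact: (projT2 (cid h')).
Qed.

Definition injle {T U} (A : set T) (B : set U) (f : T -> U) :=
  (forall x, A x -> B (f x)) /\
  (forall x y, A x -> A y -> f x = f y -> x = y).

Lemma card_le_injle {T} {U : pointedType} (A : set T) (B : set U) :
  (A #<= B)%card -> exists f, injle A B f.
Proof.
move=> /pcard_leP /injfunPex [f hf hi]; exists f; split.
  by move=> x Ax; apply: hf.
by move=> x y Ax Ay; apply: hi; rewrite inE.
Qed.

Lemma chain2 {T} (F : set (set T)) a b : total_on F subset ->
  (\bigcup_(X in F) X) a -> (\bigcup_(X in F) X) b ->
  exists X, [/\ F X, X a & X b].
Proof.
move=> tot [X FX Xa] [Y FY Yb].
have [XY|YX] := tot X Y FX FY.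
  by exists Y; split => //; apply: XY.
by exists X; split => //; apply: YX.
Qed.

Lemma compar {T : Type} (x0 : T) (P Q : set T) :
  (exists k, injle P Q k) \/ (exists j, injle Q P j).
Proof.
pose good (G : set (T * T)) := [/\
  (forall p q, G (p, q) -> P p /\ Q q),
  (forall p q q', G (p, q) -> G (p, q') -> q = q') &
  (forall p p' q, G (p, q) -> G (p', q) -> p = p')].
have [M [[MPQ Mf Mi] Mmax]] : exists A, good A /\ forall B, A `<` B -> ~ good B.
  apply: Zorn_bigcup => F FG tot; split.
  - by move=> p q [X FX Xpq]; have [] := FG X FX; move=> h _ _; apply: h.
  - move=> p q q' h1 h2; have [X [FX X1 X2]] := chain2 _ _ _ tot h1 h2.
    by have [_ h _] := FG X FX; apply: h X1 X2.
  - move=> p p' q h1 h2; have [X [FX X1 X2]] := chain2 _ _ _ tot h1 h2.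
    by have [_ _ h] := FG X FX; apply: h X1 X2.
have [allP|] := pselect (forall p, P p -> exists q, M (p, q)).
  left; exists (gfun x0 M); split.
    by move=> x Px; have /MPQ[] := gfunP x0 _ _ (allP x Px).
  move=> x y Px Py e; apply: (Mi x y (gfun x0 M x)).
    exact: (gfunP x0 _ _ (allP x Px)).
  by rewrite e; exact: (gfunP x0 _ _ (allP y Py)).
move=> /existsNP[p0 /not_implyP[Pp0 np0]].
have [allQ|] := pselect (forall q, Q q -> exists p, M (p, q)).
  right; pose M' : set (T * T) := fun z => M (z.2, z.1).
  have allQ' : forall q, Q q -> exists p, M' (q, p) by [].
  exists (gfun x0 M'); split.
    by move=> x Qx; have /MPQ[] := gfunP x0 _ _ (allQ' x Qx).
  move=> x y Qx Qy e; apply: (Mf (gfun x0 M' x)).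
    exact: (gfunP x0 _ _ (allQ' x Qx)).
  by rewrite e; exact: (gfunP x0 _ _ (allQ' y Qy)).
move=> /existsNP[q0 /not_implyP[Qq0 nq0]].
exfalso; apply: (Mmax (M `|` [set (p0, q0)])).
  split; first by move=> z Mz; left.
  move=> /(_ (p0, q0) (or_intror erefl)) Mpq; apply: np0; by exists q0.
split.
- by move=> p q [/MPQ //|[-> ->]].
- move=> p q q' [h1|h1] [h2|h2].
  + exact: Mf h1 h2.
  + by case: h2 => e _; exfalso; apply: np0; exists q; rewrite -e.
  + by case: h1 => e _; exfalso; apply: np0; exists q'; rewrite -e.
  + by case: h1 => _ ->; case: h2 => _ ->.
- move=> p p' q [h1|h1] [h2|h2].
  + exact: Mi h1 h2.
  + by case: h2 => _ e; exfalso; apply: nq0; exists p; rewrite -e.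
  + by case: h1 => _ e; exfalso; apply: nq0; exists p'; rewrite -e.
  + by case: h1 => -> _; case: h2 => -> _.
Qed.

Definition dom1 {T : Type} (G : set ((T * T) * T)) (u : T) :=
  exists w, G ((u, u), w).

Definition goodR {T : Type} (A : set T) (G0 G : set ((T * T) * T)) := [/\ G0 `<=` G,
  (forall x w w', G (x, w) -> G (x, w') -> w = w') /\
  (forall x x' w, G (x, w) -> G (x', w) -> x = x'),
  (forall u v w, G ((u, v), w) -> [/\ dom1 G u, dom1 G v & dom1 G w]),
  (forall u v, dom1 G u -> dom1 G v -> exists w, G ((u, v), w)) &
  (forall u, dom1 G u -> A u)].

Lemma dom1_mono {T : Type} (X Y : set ((T * T) * T)) u :
  X `<=` Y -> dom1 X u -> dom1 Y u.
Proof. by move=> XY [w Xw]; exists w; apply: XY. Qed.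

Lemma sq_inj {T : pointedType} (A : set T) : infinite_set A ->
  exists F : T * T -> T, (forall x y, A x -> A y -> A (F (x, y))) /\
   (forall x y u v, A x -> A y -> A u -> A v -> F (x, y) = F (u, v) ->
      x = u /\ y = v).
Proof.
move=> /infiniteP /card_le_injle [g [gA' ginj']].
have gA n : A (g n) by apply: gA'.
have ginj : injective g by move=> a b; apply: ginj'.
have := card_nat2; rewrite card_eq_le => /andP[/card_le_injle [p [_ pinj']] _].
have pinj : injective p by move=> a b; apply: pinj'.
pose G0 : set ((T * T) * T) := fun z => exists a b, z = ((g a, g b), g (p (a, b))).
pose good G := G = set0 \/ goodR A G0 G.
have dG0 a : dom1 G0 (g a) by exists (g (p (a, a))); exists a, a.
have dG0' u : dom1 G0 u -> exists a, u = g a.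
  by move=> [w [a [b [e1 _ _]]]]; exists a.
have G0good : goodR A G0 G0.
  split => //.
  - split.
    move=> x w w' [a [b [-> ->]]] [a' [b' []]] /ginj ea /ginj eb ->.
    by rewrite ea eb.
    move=> x x' w [a [b [-> ->]]] [a' [b' [-> /ginj /pinj []]]] -> ->.
    by [].
  - by move=> u v w [a [b [-> -> ->]]]; split.
  - move=> u v /dG0' [a ->] /dG0' [b ->].
    by exists (g (p (a, b))); exists a, b.
  - by move=> u /dG0' [a ->].
have [M [goodM Mmax]] : exists M, good M /\ forall B, M `<` B -> ~ good B.
  apply: Zorn_bigcup => F FG tot.
  pose U := \bigcup_(X in F) X.
  have sub X : F X -> X `<=` U by move=> FX z Xz; exists X.
  have gr X z : F X -> X z -> goodR A G0 X.
    by move=> FX Xz; case: (FG X FX) => // X0; rewrite X0 in Xz.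
  have [[z0 [X0 FX0 Xz0]]|nU] := pselect (exists z, U z); last first.
    left; apply/seteqP; split => z // Uz; apply: nU; by exists z.
  right; split.
  - have [+ _ _ _ _] := gr X0 z0 FX0 Xz0.
    by move=> h z G0z; apply: (sub X0 FX0); apply: h.
  - split.
      move=> x w w' h1 h2; have [X [FX X1 X2]] := chain2 _ _ _ tot h1 h2.
      by have [_ [hf _] _ _ _] := gr X _ FX X1; apply: hf X1 X2.
    move=> x x' w h1 h2; have [X [FX X1 X2]] := chain2 _ _ _ tot h1 h2.
    by have [_ [_ hf] _ _ _] := gr X _ FX X1; apply: hf X1 X2.
  - move=> u v w [X FX Xz]; have [_ _ hc _ _] := gr X _ FX Xz.
    have [a b c] := hc _ _ _ Xz.
    by split; apply: (dom1_mono _ _ _ (sub X FX)).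
  - move=> u v [w1 h1] [w2 h2]; have [X [FX X1 X2]] := chain2 _ _ _ tot h1 h2.
    have [_ _ _ ht _] := gr X _ FX X1.
    have [|//|w Xw] := ht u v; first by exists w1.
      by exists w2.
    by exists w; exists X.
  - move=> u [w [X FX Xz]]; have [_ _ _ _ hA] := gr X _ FX Xz.
    by apply: hA; exists w.
have [G0M [Mf Mi] Mc Mt MA] : goodR A G0 M.
  case: goodM => // M0; exfalso; apply: (Mmax G0); last by right.
  have z0 : G0 ((g 0%N, g 0%N), g (p (0%N, 0%N))) by exists 0%N, 0%N.
  by rewrite M0; split => // /(_ _ z0).
pose B := dom1 M.
pose f := gfun point M.
have fM u v : B u -> B v -> M ((u, v), f (u, v)).
  by move=> Bu Bv; apply: gfunP; apply: Mt.
have fB u v : B u -> B v -> B (f (u, v)).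
  by move=> Bu Bv; have [] := Mc _ _ _ (fM u v Bu Bv).
have finj u v u' v' : B u -> B v -> B u' -> B v' -> f (u, v) = f (u', v') ->
    u = u' /\ v = v'.
  move=> Bu Bv Bu' Bv' e.
  have := fM u' v' Bu' Bv'; rewrite -e => h.
  by have [] := Mi _ _ _ (fM u v Bu Bv) h.
have Bg n : B (g n) by apply: (dom1_mono _ _ _ G0M).
have BA u : B u -> A u by apply: MA.
have g012 : [/\ g 0%N <> g 1%N, g 0%N <> g 2%N & g 1%N <> g 2%N].
  by split => /ginj.
have NoExt : ~ exists k, injle B (A `\` B) k.
  move=> [k [kB kinj]].
  pose K : set (T * T) := fun z => B z.2 /\ k z.2 = z.1.
  pose kinv := gfun point K.
  have kinvK b : B b -> kinv (k b) = b.
    move=> Bb; have [h1 h2] := gfunP point K (k b) (ex_intro _ b (conj Bb erefl)).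
    exact: kinj h1 Bb h2.
  pose C := fun c => exists2 b, B b & c = k b.
  have CnB c : C c -> ~ B c by move=> [b Bb ->]; case: (kB b Bb).
  have CA c : C c -> A c by move=> [b Bb ->]; case: (kB b Bb).
  pose BC u := B u \/ C u.
  pose r u := if pselect (B u) then u else kinv u.
  have rB u : BC u -> B (r u).
    rewrite /r; case: pselect => //= Bu [//|[b Bb ->]].
    by rewrite kinvK.
  have rCe u : BC u -> ~ B u -> u = k (kinv u).
    by move=> [//|[b Bb ->]] _; rewrite kinvK.
  pose tag u v := if pselect (B u) then g 0%N
    else if pselect (B v) then g 1%N else g 2%N.
  have tagB u v : B (tag u v).
    by rewrite /tag; case: pselect => ? /=; [|case: pselect => ? /=].
  pose val u v := k (f (tag u v, f (r u, r v))).
  have valB u v : BC u -> BC v -> B (f (tag u v, f (r u, r v))).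
    by move=> hu hv; exact: (fB _ _ (tagB _ _) (fB _ _ (rB _ hu) (rB _ hv))).
  have valC u v : BC u -> BC v -> C (val u v).
    by move=> hu hv; exists (f (tag u v, f (r u, r v))) => //; apply: valB.
  have key u v u' v' : BC u -> BC v -> ~ (B u /\ B v) ->
      BC u' -> BC v' -> ~ (B u' /\ B v') ->
      tag u v = tag u' v' -> r u = r u' -> r v = r v' -> u = u' /\ v = v'.
    { move: (rCe u) (rCe v) (rCe u') (rCe v').
    rewrite /tag /r; case: g012 => g01' g02 g12.
    case: (pselect (B u)) => Bu; case: (pselect (B v)) => Bv;
    case: (pselect (B u')) => Bu'; case: (pselect (B v')) => Bv';
    move=> /= cu cv cu' cv' BCu BCv nBB BCu' BCv' nBB' et eu ev;
    try (by case: nBB); try (by case: nBB');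
    try (by case: g01'); try (by case: g02); try (by case: g12);
    try (by case: g01'; rewrite et); try (by case: g02; rewrite et);
    try (by case: g12; rewrite et).
    all: split; first (by []) || by rewrite cu // cu' // eu.
    all: by [] || by rewrite cv // cv' // ev. }
  pose E : set ((T * T) * T) := fun z => [/\ BC z.1.1, BC z.1.2,
     ~ (B z.1.1 /\ B z.1.2) & z.2 = val z.1.1 z.1.2].
  have Mc' u v w : M ((u, v), w) -> [/\ B u, B v & B w].
    by move=> /Mc.
  have dE u : dom1 (M `|` E) u -> BC u.
    by move=> [w [h|[h1 _ _ _]]]; [left; exists w | exact h1].
  have dEi u : BC u -> dom1 (M `|` E) u.
    move=> [Bu|Cu]; first by apply: (dom1_mono _ _ _ _ Bu) => z h; left.
    exists (val u u); right; split => //=; try by right.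
    by move=> [/(CnB _ Cu)].
  have z1E : E ((k (g 0%N), k (g 0%N)), val (k (g 0%N)) (k (g 0%N))).
    have C0 : C (k (g 0%N)) by exists (g 0%N).
    split => //=; try by right.
    by move=> [/(CnB _ C0)].
  apply: (Mmax (M `|` E)).
    split; first by move=> z h; left.
    move=> /(_ _ (or_intror z1E)) /Mc' [h _ _].
    by apply: (CnB (k (g 0%N))) => //; exists (g 0%N).
  right; split.
  - by move=> z /G0M h; left.
  - split.
      move=> [u v] w w' [h1|h1] [h2|h2].
      + exact: Mf h1 h2.
      + by have [Bu Bv _] := Mc' _ _ _ h1; case: h2 => _ _ [].
      + by have [Bu Bv _] := Mc' _ _ _ h2; case: h1 => _ _ [].
      + by case: h1 => _ _ _ /= ->; case: h2 => _ _ _ /= ->.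
    move=> [u v] [u' v'] w [h1|h1] [h2|h2].
    + exact: Mi h1 h2.
    + have [_ _ Bw] := Mc' _ _ _ h1; case: h2 => hu hv _ /= e.
      by exfalso; apply: (CnB w) => //; rewrite e; apply: valC.
    + have [_ _ Bw] := Mc' _ _ _ h2; case: h1 => hu hv _ /= e.
      by exfalso; apply: (CnB w) => //; rewrite e; apply: valC.
    + case: h1 => /= hu hv nB e0; case: h2 => /= hu' hv' nB' e; rewrite e0 in e.
      have e1 := kinj _ _ (valB _ _ hu hv) (valB _ _ hu' hv') e.
      have [et e2] := finj _ _ _ _ (tagB _ _) (fB _ _ (rB _ hu) (rB _ hv))
        (tagB _ _) (fB _ _ (rB _ hu') (rB _ hv')) e1.
      have [eu ev] := finj _ _ _ _ (rB _ hu) (rB _ hv) (rB _ hu') (rB _ hv') e2.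
      by have [-> ->] := key u v u' v' hu hv nB hu' hv' nB' et eu ev.
  - move=> u v w [h|h].
      have [Bu Bv Bw] := Mc' _ _ _ h.
      by split; apply: dEi; left.
    case: h => /= hu hv _ ->.
    by split; apply: dEi => //; right; apply: valC.
  - move=> u v /dE hu /dE hv.
    have [[Bu Bv]|nB] := pselect (B u /\ B v).
      by have [w Mw] := Mt u v Bu Bv; exists w; left.
    by exists (val u v); right; split.
  - by move=> u /dE [/BA //|/CA].
have [[k hk]|[j [jB jinj]]] := compar point B (A `\` B).
  by exfalso; apply: NoExt; exists k.
pose m u := if pselect (B u) then f (g 0%N, u) else f (g 1%N, j u).
have mB u : A u -> B (m u).
  move=> Au; rewrite /m; case: pselect => Bu; apply: fB => //.
  by apply: jB.
have g01 : g 0%N <> g 1%N by move=> /ginj.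
have minj u u' : A u -> A u' -> m u = m u' -> u = u'.
  move=> Au Au'; rewrite /m.
  case: pselect => Bu; case: pselect => Bu' e.
  - by have [] := finj _ _ _ _ (Bg 0%N) Bu (Bg 0%N) Bu' e.
  - by have [] := finj _ _ _ _ (Bg 0%N) Bu (Bg 1%N) (jB u' (conj Au' Bu')) e.
  - have [h _] := finj _ _ _ _ (Bg 1%N) (jB u (conj Au Bu)) (Bg 0%N) Bu' e.
    by case: g01.
  - have [_ e'] := finj _ _ _ _ (Bg 1%N) (jB u (conj Au Bu)) (Bg 1%N)
      (jB u' (conj Au' Bu')) e.
    exact: jinj e'.
exists (fun xy => f (m xy.1, m xy.2)); split.
  by move=> x y Ax Ay /=; apply: BA; apply: fB; apply: mB.
move=> x y u v Ax Ay Au Av /= e.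
have [e1 e2] := finj _ _ _ _ (mB x Ax) (mB y Ay) (mB u Au) (mB v Av) e.
by split; apply: minj.
Qed.

Local Open Scope ring_scope.

Lemma ud_inj (R : realType) (S : set R) (HSud : ubiquitously_dense_nonneg S)
  (a b : R) : 0 <= a -> a < b ->
  exists psi, injle S (fun x => S x /\ a < x < b) psi.
Proof.
move=> a0 ab.
pose V := [set x : R | a < x] `&` [set x | x < b].
have oV : open V by apply: openI; [exact: open_gt | exact: open_lt].
have := HSud V oV; rewrite /=.
have ne : (V `&` [set x | 0 <= x]) !=set0.
  exists ((a + b) / 2); split; [split => /=|rewrite /=]; lra.
move=> /(_ ne); rewrite card_eq_le => /andP[_ /card_le_injle [psi [h1 h2]]].
exists psi; split => // x Sx; have [[[/= h3 h4] _] h5] := h1 x Sx.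
by split => //; apply/andP.
Qed.

Lemma minmax_inj (R : realType) (a b c e : R) :
  Num.min a b = Num.min c e -> Num.max a b = Num.max c e ->
  (a = c /\ b = e) \/ (a = e /\ b = c).
Proof.
case: (leP a b) => ab; case: (leP c e) => ce => -> ->; by [left | right].
Qed.

Theorem theorem2p5 (R : realType) (S : set R)
  (HS0 : S 0) (HSpos : S `<=` [set x | 0 <= x])
  (HSud : ubiquitously_dense_nonneg S)
  (X : topologicalType) (Hdisc : forall A : set X, open A)
  (HcardX : ([set: X] #<= S)%card)
  (d : X -> X -> R) (Hd : Met [set x | 0 <= x] d)
  (eps : R) (Heps : 0 < eps) :
  exists e : X -> X -> R,
    [/\ Met S e,
        (DX d e <= eps%:E)%E,
        uniformly_discrete e,
        (forall x y z, x <> y -> y <> z -> x <> z -> e x y < e x z + e z y) &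
        strongly_rigid e].
Proof.
case: Hd => -[d0 dxx dsym dtri] _ _.
pose h := eps / 8.
have h0 : 0 < h by rewrite /h; lra.
have [io [ioS' ioinj']] := card_le_injle _ _ HcardX.
have ioS x : S (io x) by apply: ioS'.
have ioinj : injective io by move=> x y; apply: ioinj'.
have Sinf : infinite_set S.
  apply/infiniteP/pcard_leP/injfunPex.
  have hs n : exists s, S s /\ n%:R < s < n%:R + 1.
    have lt1 : (n%:R : R) < n%:R + 1 by lra.
    have [psi [psiS _]] := ud_inj _ _ HSud _ _ (ler0n R n) lt1.
    by have [] := psiS 0 HS0; move=> h1 h2; exists (psi 0); split.
  pose s n := projT1 (cid (hs n)).
  have sP n : S (s n) /\ n%:R < s n < n%:R + 1 := projT2 (cid (hs n)).
  exists s; first by move=> n _; case: (sP n).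
  move=> n m _ _ e.
  have [_ /andP[a1 a2]] := sP n; have [_ /andP[b1 b2]] := sP m.
  rewrite e in a1 a2.
  have h1 : (n%:R : R) < m%:R + 1 by apply: lt_trans b2.
  have h2 : (m%:R : R) < n%:R + 1 by apply: lt_trans a2.
  rewrite natr1 ltr_nat in h1; rewrite natr1 ltr_nat in h2.
  lia.
have [F [FS Finj]] := sq_inj _ Sinf.
pose lo (z : int) := (z%:~R + 5) * h.
have hpsi : forall z : int, exists psi, 0 <= z ->
    injle S (fun x => S x /\ lo z < x < lo z + h) psi.
  move=> z; have [z0|z0] := pselect (0 <= z); last by exists id.
  have lo0 : 0 <= lo z.
    rewrite /lo; apply: mulr_ge0; last exact: ltW.
    have : (0 : R) <= z%:~R by rewrite ler0z.
    lra.
  have lt1 : lo z < lo z + h by lra.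
  have [psi hp] := ud_inj _ _ HSud _ _ lo0 lt1.
  by exists psi.
pose Psi z := projT1 (cid (hpsi z)).
have PsiP z : 0 <= z -> injle S (fun x => S x /\ lo z < x < lo z + h) (Psi z).
  exact: projT2 (cid (hpsi z)).
pose zz x y := Num.floor (d x y / h).
have zz0 x y : 0 <= zz x y by rewrite floor_ge0 divr_ge0 // ltW.
have zzsym x y : zz x y = zz y x by rewrite /zz dsym.
have zzlo x y : (zz x y)%:~R * h <= d x y.
  by rewrite -ler_pdivlMr //; apply: floor_le_tmp.
have zzhi x y : d x y < (zz x y)%:~R * h + h.
  have := lt_succ_floor (d x y / h); rewrite ltr_pdivrMr // intrD.
  by rewrite mulrDl mul1r.
pose mn x y := Num.min (io x) (io y).
pose mx x y := Num.max (io x) (io y).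
have mnS x y : S (mn x y) by rewrite /mn; case: leP.
have mxS x y : S (mx x y) by rewrite /mx; case: leP.
pose e x y := if pselect (x = y) then 0 else Psi (zz x y) (F (mn x y, mx x y)).
have eP x y : x <> y ->
    S (e x y) /\ lo (zz x y) < e x y < lo (zz x y) + h.
  move=> nxy; rewrite /e; case: pselect => //= ?.
  by have [+ _] := PsiP _ (zz0 x y); apply; apply: FS.
have ebnd x y : x <> y -> d x y + 4 * h < e x y < d x y + 6 * h.
  move=> /eP [_ /andP[h1 h2]]; move: h1 h2; rewrite /lo.
  have := zzlo x y; have := zzhi x y.
  move: (zz x y)%:~R => Z; rewrite !mulrDl => a b c1 c2.
  apply/andP; split; lra.
have exx x : e x x = 0 by rewrite /e; case: pselect.
have esym x y : e x y = e y x.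
  have [->//|nxy] := pselect (x = y).
  rewrite /e; case: pselect => //= _; case: pselect => //= [eyx|_].
    by case: nxy.
  by rewrite zzsym /mn /mx minC maxC.
have e0 x y : 0 <= e x y.
  have [->|nxy] := pselect (x = y); first by rewrite exx.
  have := ebnd x y nxy; have := d0 x y; move=> a /andP[b _]; lra.
have eS x y : S (e x y).
  by have [->|nxy] := pselect (x = y); [rewrite exx | case: (eP x y nxy)].
have estrict x y z : x <> y -> y <> z -> x <> z -> e x y < e x z + e z y.
  move=> nxy nyz nxz.
  have /andP[_ a] := ebnd x y nxy.
  have /andP[b _] := ebnd x z nxz.
  have nzy : z <> y by move=> h'; apply: nyz.
  have /andP[c _] := ebnd z y nzy.
  have := dtri x y z; lra.
exists e; split => //.
- split => //; split.
  + exact: e0.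
  + move=> x y; split; last by move=> ->; rewrite exx.
    move=> exy; have [//|nxy] := pselect (x = y).
    have := ebnd x y nxy; have := d0 x y; rewrite exy => a /andP[b _].
    exfalso; lra.
  + exact: esym.
  + move=> x y z.
    have [->|nxy] := pselect (x = y); first by rewrite exx addr_ge0.
    have [->|nxz] := pselect (x = z); first by rewrite exx add0r.
    have [->|nzy] := pselect (z = y); first by rewrite exx addr0.
    apply: ltW; apply: estrict => // h'; apply: nzy; by rewrite h'.
  + move=> _ x Ax; exists (4 * h); first lra.
    move=> y lt; have [<-//|nxy] := pselect (x = y).
    have := ebnd x y nxy; have := d0 x y => a /andP[b _].
    exfalso; lra.
  + by move=> _; apply: Hdisc.
- apply: ge_ereal_sup => _ [[x y] _ <-] /=; rewrite lee_fin.
  have [<-|nxy] := pselect (x = y).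
    rewrite exx (proj2 (dxx x x) erefl) subr0 normr0; exact: ltW.
  have := ebnd x y nxy; move=> /andP[a b].
  rewrite ler_norml; apply/andP; split; rewrite /h in a b *; lra.
- exists (4 * h); first lra.
  by move=> x y nxy; have /andP[a _] := ebnd x y nxy; have := d0 x y; lra.
- move=> x y u v exy nz.
  have nxy : x <> y by move=> e1; apply: nz; rewrite e1 exx.
  have nuv : u <> v by move=> e1; apply: nz; rewrite exy e1 exx.
  have [_ /andP[a1 a2]] := eP x y nxy; have [_ /andP[b1 b2]] := eP u v nuv.
  rewrite exy in a1 a2.
  have i1 : zz x y < zz u v + 1.
    rewrite -(ltr_int R) intrD; move: a1 b2; rewrite /lo.
    move: (zz x y)%:~R (zz u v)%:~R => Z1 Z2 a b; nra.
  have i2 : zz u v < zz x y + 1.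
    rewrite -(ltr_int R) intrD; move: a2 b1; rewrite /lo.
    move: (zz x y)%:~R (zz u v)%:~R => Z1 Z2 a b; nra.
  have zeq : zz x y = zz u v by lia.
  have ex : e x y = Psi (zz x y) (F (mn x y, mx x y)) by rewrite /e; case: pselect.
  have eu : e u v = Psi (zz u v) (F (mn u v, mx u v)) by rewrite /e; case: pselect.
  rewrite ex eu -zeq in exy.
  have [_ pinj] := PsiP _ (zz0 x y).
  have := pinj _ _ (FS _ _ (mnS x y) (mxS x y)) (FS _ _ (mnS u v) (mxS u v)) exy.
  move=> /(Finj _ _ _ _ (mnS x y) (mxS x y) (mnS u v) (mxS u v)) [m1 m2].
  have [[/ioinj -> /ioinj ->]|[/ioinj -> /ioinj ->]] := minmax_inj _ _ _ _ _ m1 m2.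
    by left.
  by right.
Qed.
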